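(* Let $q,d\geq 2$ be integers. Suppose that for every $\mathbf{s}\in(\mathbb{Z}/d\mathbb{Z})^5$ the density $\delta(q,d;\mathbf{s})$ exists, and let $\boldsymbol{\delta}$ be the column vector $(\delta(q,d;\mathbf{s}))_{\mathbf{s}\in(\mathbb{Z}/d\mathbb{Z})^5}$. Then $P(q,d)\boldsymbol{\delta}=\boldsymbol{\delta}$ (i.e., $\boldsymbol{\delta}$ is a right eigenvector of $P(q,d)$ with eigenvalue $1$), and all entries of $\boldsymbol{\delta}$ are rational numbers.
   Context: For an integer $q\geq 2$ and $n\in\mathbb{N}$: $v_q(0)=0$ and, for $n>0$, $v_q(n)=\max\{k: q^k\mid n\}$; $w_q(n)=\sum_{i=0}^n v_q(i)$; $u_q(n)=\sum_{i=0}^n w_q(i)$. For $\mathbf{s}=(\theta_u,\theta_w,\theta_2,\theta_1,\theta_0)$ with entries in $\mathbb{Z}$ (or in $\mathbb{Z}/d\mathbb{Z}$, which is equivalent since only residues mod $d$ matter), $\gamma(A,q,d;\mathbf{s})$ is the number of $n\in\mathbb{N}$, $n<A$, with $\theta_u u_q(n)+\theta_w w_q(n)+\theta_2\frac{n(n+1)}{2}+\theta_1 n+\theta_0\equiv 0\pmod d$, and $\delta(q,d;\mathbf{s})=\lim_{N\to\infty}\gamma(N,q,d;\mathbf{s})/N$ when this limit exists. For $\lambda\in\{0,\ldots,q-1\}$ let $M_\lambda$ be the $5\times5$ matrix, reduced modulo $d$, $$M_\lambda=\begin{pmatrix} q & \lambda-q+1 & q & \lambda-q+1 & 0\\ 0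 & 1 & 0 & 1 & 0\\ 0 & 0 & q^2 & \lambda q-\frac{q(q-1)}{2} & \frac{\lambda(\lambda+1)}{2}\\ 0 & 0 & 0 & q & \lambda\\ 0 & 0 & 0 & 0 & 1 \end{pmatrix}.$$ For $\mathbf{s},\mathbf{t}\in(\mathbb{Z}/d\mathbb{Z})^5$ (row vectors), let $\mu(\mathbf{s},\mathbf{t})$ be the number of $\lambda\in\{0,\ldots,q-1\}$ with $\mathbf{t}=\mathbf{s}M_\lambda$. Then $P(q,d)$ is the $d^5\times d^5$ matrix indexed by $(\mathbb{Z}/d\mathbb{Z})^5$ with $(\mathbf{s},\mathbf{t})$-entry $\mu(\mathbf{s},\mathbf{t})/q$. *)

(* Defs.v *)
From HB Require Import structures.
From mathcomp Require Import all_boot all_order all_algebra.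
From mathcomp Require Import all_classical all_reals all_analysis.
Unset Printing Implicit Defensive.
Import Order.TTheory GRing.Theory Num.Theory.
Local Open Scope ring_scope.

(* v_q(0) = 0 ; v_q(n) = max{k : q^k | n} for n > 0.  For q >= 2 and n > 0,
   every such k satisfies k < n+1, so the bounded max is the true max. *)
Definition vq (q n : nat) : nat :=
  if n == 0%N then 0%N else (\max_(k < n.+1 | (q ^ k %| n)%N) (k : nat))%N.

Definition wq (q n : nat) : nat := (\sum_(i < n.+1) vq q i)%N.

Definition uq (q n : nat) : nat := (\sum_(i < n.+1) wq q i)%N.

(* s = (theta_u, theta_w, theta_2, theta_1, theta_0) as a row vector in (Z/dZ)^5,
   coordinates 0..4 in that order. *)
Definition cond (q d : nat) (s : 'rV['Z_d]_5) (n : nat) : bool :=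
  s 0 0 * (uq q n)%:R + s 0 1 * (wq q n)%:R + s 0 2 * ((n * n.+1)./2)%:R
  + s 0 3 * n%:R + s 0 4 == 0.

Definition gamma (A q d : nat) (s : 'rV['Z_d]_5) : nat :=
  #|[set n : 'I_A | cond q d s n]|.

Definition Mentry (d q lam : nat) (i j : nat) : 'Z_d :=
  match i, j with
  | 0, 0 => q%:R
  | 0, 1 => lam%:R - q%:R + 1
  | 0, 2 => q%:R
  | 0, 3 => lam%:R - q%:R + 1
  | 1, 1 => 1
  | 1, 3 => 1
  | 2, 2 => (q ^ 2)%:R
  | 2, 3 => (lam * q)%:R - ((q * (q - 1))./2)%:R
  | 2, 4 => ((lam * lam.+1)./2)%:R
  | 3, 3 => q%:R
  | 3, 4 => lam%:R
  | 4, 4 => 1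
  | _, _ => 0
  end.

Definition Mlam (d q lam : nat) : 'M['Z_d]_5 :=
  \matrix_(i < 5, j < 5) Mentry d q lam i j.

Definition mu (q d : nat) (s t : 'rV['Z_d]_5) : nat :=
  #|[set lam : 'I_q | t == s *m Mlam d q lam]|.

Definition Pqd {R : realType} (q d : nat) (s t : 'rV['Z_d]_5) : R :=
  (mu q d s t)%:R / q%:R.

(* Main.v *)
Require Import Defs.
From HB Require Import structures.
From mathcomp Require Import all_boot all_order all_algebra.
From mathcomp Require Import all_classical all_reals all_analysis.
From mathcomp Require Import zify ring lra.
Import Order.TTheory GRing.Theory Num.Theory numFieldNormedType.Exports.

Section NT.
Variable q : nat.
Hypothesis hq : 1 < q.

Lemma ltn_expq k : k < q ^ k.
Proof.
elim: k => [|k IH]; first by rewrite expn0.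
rewrite expnS. have: 2 * q ^ k <= q * q ^ k by rewrite leq_mul2r hq orbT.
lia.
Qed.

Lemma vq_spec n : 0 < n -> q ^ vq q n %| n /\ forall k, q ^ k %| n -> k <= vq q n.
Proof.
move=> n0; rewrite /vq; have -> : (n == 0) = false by lia.
have kb : forall k, q ^ k %| n -> k < n.+1.
  move=> k /(dvdn_leq n0) h; have := ltn_expq k; lia.
split.
  rewrite (@bigop.bigmax_eq_arg _ ord0 (fun k : 'I_n.+1 => q ^ k %| n) (fun k => nat_of_ord k)) ?expn0 ?dvd1n //.
  by case: arg_maxnP => //=; rewrite expn0 dvd1n.
move=> k hk. exact: (@leq_bigmax_cond _ (fun k : 'I_n.+1 => q ^ k %| n) (fun k => nat_of_ord k) (Ordinal (kb k hk)) hk).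
Qed.

Lemma vq0 : vq q 0 = 0.
Proof. by rewrite /vq. Qed.

Lemma vq_ndvd n : ~~ (q %| n) -> vq q n = 0.
Proof.
move=> nd; case: n nd => [|n] nd; first by rewrite vq0.
have [h1 h2] := vq_spec _ (ltn0Sn n).
case E: (vq q n.+1) h1 => [//|k] h1.
by move: nd; rewrite (dvdn_trans _ h1) // expnS dvdn_mulr.
Qed.

Lemma vq_mul j : 0 < j -> vq q (q * j) = (vq q j).+1.
Proof.
move=> j0; have q0 : 0 < q by lia.
have qj0 : 0 < q * j by rewrite muln_gt0 q0.
have [a1 a2] := vq_spec _ j0; have [b1 b2] := vq_spec _ qj0.
apply/eqP; rewrite eqn_leq; apply/andP; split; last first.
  by apply: b2; rewrite expnS dvdn_pmul2l.
case E: (vq q (q * j)) b1 => [//|k] b1.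
by rewrite ltnS; apply: a2; move: b1; rewrite expnS dvdn_pmul2l.
Qed.

Lemma wq0 : wq q 0 = 0.
Proof. by rewrite /wq big_ord_recr big_ord0 /= vq0. Qed.

Lemma wqS n : wq q n.+1 = wq q n + vq q n.+1.
Proof. by rewrite /wq big_ord_recr. Qed.

Lemma uq0 : uq q 0 = 0.
Proof. by rewrite /uq big_ord_recr big_ord0 /= wq0. Qed.

Lemma uqS n : uq q n.+1 = uq q n + wq q n.+1.
Proof. by rewrite /uq big_ord_recr. Qed.

Lemma vq_small m l : 0 < l < q -> vq q (q * m + l) = 0.
Proof.
move=> hl; apply: vq_ndvd; rewrite dvdn_addr ?dvdn_mulr //.
by rewrite gtnNdvd //; lia.
Qed.

Lemma wq_step m l : l < q -> wq q (q * m + l) = m + wq q m.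
Proof.
elim: m l => [|m IH] l hl.
  rewrite muln0 add0n wq0.
  elim: l hl => [|l IHl] hl; first by rewrite wq0.
  rewrite wqS vq_ndvd; last by rewrite gtnNdvd.
  by rewrite addn0 IHl // ltnW.
elim: l hl => [|l IHl] hl.
  have -> : q * m.+1 + 0 = (q * m + q.-1).+1 by lia.
  rewrite wqS IH; last by lia.
  have -> : (q * m + q.-1).+1 = q * m.+1 by lia.
  rewrite vq_mul // wqS; lia.
have -> : q * m.+1 + l.+1 = (q * m.+1 + l).+1 by lia.
rewrite wqS IHl; last by lia.
have -> : (q * m.+1 + l).+1 = q * m.+1 + l.+1 by lia.
rewrite vq_small; [lia | lia].
Qed.

Definition Tn n := (n * n.+1)./2.

Lemma T2 n : (Tn n).*2 = n * n.+1.
Proof.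
rewrite /Tn; have := halfK (n * n.+1); rewrite oddM oddS andbN subn0 => ->. done.
Qed.

Lemma TS n : Tn n.+1 = Tn n + n.+1.
Proof. have := T2 n; have := T2 n.+1; lia. Qed.

Lemma T0 : Tn 0 = 0. Proof. by []. Qed.

Lemma uq_step m l : l < q ->
  uq q (q * m + l) + q * (wq q m + m) = q * (uq q m + Tn m) + l.+1 * (wq q m + m).
Proof.
elim: m l => [|m IH] l hl.
  rewrite wq0 uq0 T0 muln0 add0n.
  elim: l hl => [|l IHl] hl; first by rewrite uq0.
  rewrite uqS. have := wq_step 0 l.+1 hl. rewrite wq0 muln0 add0n => ->.
  have := IHl (ltnW hl). lia.
elim: l hl => [|l IHl] hl.
  have := IH q.-1 ltac:(lia).
  have -> : q * m.+1 + 0 = (q * m + q.-1).+1 by lia.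
  rewrite uqS.
  have -> : (q * m + q.-1).+1 = q * m.+1 + 0 by lia.
  rewrite wq_step // uqS TS.
  have -> : q.-1.+1 = q by lia.
  nia.
have := IHl (ltnW hl).
have -> : q * m.+1 + l.+1 = (q * m.+1 + l).+1 by lia.
rewrite (uqS (q * m.+1 + l)).
have -> : (q * m.+1 + l).+1 = q * m.+1 + l.+1 by lia.
rewrite wq_step //; lia.
Qed.

Lemma T_step m l :
  Tn (q * m + l) + Tn q.-1 * m = q * q * Tn m + l * q * m + Tn l.
Proof.
apply: double_inj; rewrite !doubleD !T2 -!mul2n.
have := T2 m; have := T2 q.-1; have := T2 l; have := T2 (q * m + l).
rewrite -!mul2n. nia.
Qed.
End NT.

Local Open Scope ring_scope.

Lemma sum5 (V : zmodType) (F : 'I_5 -> V) : \sum_(i < 5) F i = F 0 + F 1 + F 2 + F 3 + F 4.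
Proof.
rewrite !big_ord_recl big_ord0 addr0 !addrA.
by congr (_ + _ + _ + _ + _); apply: congr1; apply: val_inj.
Qed.

Lemma condM q d (hq : (1 < q)%N) (s : 'rV['Z_d]_5) m l (hl : (l < q)%N) :
  cond q d (s *m Mlam d q l) m = cond q d s (q * m + l)%N.
Proof.
rewrite /cond !mxE !sum5 !mxE /=.
rewrite -[(m * m.+1)./2]/(Tn m) -[(l * l.+1)./2]/(Tn l).
rewrite -[((q * m + l) * (q * m + l).+1)./2]/(Tn (q * m + l)).
have eTq : (q * (q - 1))./2 = Tn q.-1.
  by rewrite /Tn prednK ?subn1 1?mulnC //; lia.
rewrite eTq.
have Hu : (uq q (q * m + l))%:R = (q * (uq q m + Tn m) + l.+1 * (wq q m + m))%:R
   - (q * (wq q m + m))%:R :> 'Z_d.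
  by rewrite -uq_step // natrD addrK.
have Hw : (wq q (q * m + l))%:R = (m + wq q m)%:R :> 'Z_d by rewrite wq_step.
have HT : (Tn (q * m + l))%:R = (q * q * Tn m + l * q * m + Tn l)%:R - (Tn q.-1 * m)%:R :> 'Z_d.
  by rewrite -T_step // natrD addrK.
rewrite Hu Hw HT.
rewrite !natrD !natrM !natrD.
congr (_ == 0). ring.
Qed.

Lemma gammaE A q d s : gamma A q d s = (\sum_(n < A) (cond q d s n : nat))%N.
Proof.
rewrite /gamma -sum1_card big_mkcond /=; apply: eq_bigr => i _; rewrite inE.
by case: cond.
Qed.

Lemma sum_split (f : nat -> nat) q N :
  (\sum_(n < q * N) f n = \sum_(m < N) \sum_(l < q) f (q * m + l))%N.
Proof.
elim: N => [|N IH]; first by rewrite muln0 !big_ord0.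
rewrite big_ord_recr /= -IH -!(big_mkord xpredT) (@big_cat_nat _ _ _ (q * N)) /=; last 2 first.
- by [].
- by rewrite leq_mul2l leqnSn orbT.
congr (_ + _)%N.
rewrite -{1}(add0n (q * N)%N) big_addn.
have -> : (q * N.+1 - q * N = q)%N by rewrite mulnS addnK.
by rewrite big_mkord; apply: eq_bigr => i _; rewrite addnC.
Qed.

Lemma gammaM q d (hq : (1 < q)%N) N s :
  gamma (q * N)%N q d s = (\sum_(l < q) gamma N q d (s *m Mlam d q l))%N.
Proof.
rewrite gammaE (sum_split (fun n => (cond q d s n : nat))) exchange_big /=; apply: eq_bigr => l _.
by rewrite gammaE; apply: eq_bigr => m _; rewrite condM.
Qed.

Lemma mu_sum (R : ringType) q d s (g : 'rV['Z_d]_5 -> R) :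
  \sum_t (mu q d s t)%:R * g t = \sum_(l < q) g (s *m Mlam d q l).
Proof.
have muE t : mu q d s t = (\sum_(l < q) (t == s *m Mlam d q l : nat))%N.
  rewrite /mu -sum1_card big_mkcond /=; apply: eq_bigr => i _; rewrite inE.
  by case: (_ == _).
under eq_bigr do rewrite muE natr_sum mulr_suml.
rewrite exchange_big /=; apply: eq_bigr => l _.
rewrite (bigD1 (s *m Mlam d q l)) //= eqxx mul1r big1 ?addr0 // => t /negbTE ->.
by rewrite mul0r.
Qed.

Local Open Scope classical_set_scope.

Lemma subseq_cvg (R : realType) (u : nat -> R) (l : R) (g : nat -> nat) :
  (forall n, (n <= g n)%N) -> u n @[n --> \oo] --> l -> u (g n) @[n --> \oo] --> l.
Proof.
move=> hg hu.
have hg' : g n @[n --> \oo] --> \oo.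
  move=> P [N _ HN]; exists N => // n /= Hn; apply: HN; exact: (leq_trans Hn).
exact: (cvg_comp _ _ hg' hu).
Qed.

Lemma cvg_sumr (R : realType) (I : Type) (r : seq I) (u : I -> nat -> R) (l : I -> R) :
  (forall i, u i n @[n --> \oo] --> l i) ->
  (\sum_(i <- r) u i n) @[n --> \oo] --> \sum_(i <- r) l i.
Proof.
move=> h; elim: r => [|i r IH].
  rewrite big_nil; under eq_fun do rewrite big_nil; exact: cvg_cst.
rewrite big_cons; under eq_fun do rewrite big_cons; exact: cvgD.
Qed.

Lemma bdd_diff_pos (R : realType) (g : nat -> R) (c L : R) :
  (forall k, `|g k| <= c) -> (g k - g k.+1) @[k --> \oo] --> L -> ~ (0 < L).
Proof.
move=> hg hu L0.
have [N _ HN] := cvgr_dist_lt _ _ hu _ (divr_gt0 L0 (ltr0Sn _ 1) : 0 < L / 2).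
have key : forall M, M%:R * (L / 2) <= g N - g (N + M)%N.
  elim=> [|M IH]; first by rewrite mul0r addn0 subrr.
  have := HN (N + M)%N (leq_addr _ _); rewrite /= ltr_norml => /andP[h1 h2].
  rewrite addnS mulrSr mulrDl mul1r; lra.
have c0 : 0 <= c by apply: le_trans (hg 0%N); exact: normr_ge0.
have hb := archi_boundP (divr_ge0 (mulr_ge0 (ler0n _ 4) c0) (ltW L0) : 0 <= 4 * c / L).
set M := Num.bound _ in hb.
have := key M.
have := hg N; have := hg (N + M)%N; rewrite !ler_norml => /andP[a1 a2] /andP[a3 a4].
rewrite ltr_pdivrMr // in hb.
move=> hk; nra.
Qed.


Lemma bdd_diff (R : realType) (g : nat -> R) (c L : R) :
  (forall k, `|g k| <= c) -> (g k - g k.+1) @[k --> \oo] --> L -> L = 0.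
Proof.
move=> hg hu; apply/eqP; rewrite eq_le; apply/andP; split; rewrite leNgt; apply/negP => h.
  exact: (bdd_diff_pos _ _ _ _ hg hu h).
have hg' : forall k, `|(- g k)| <= c by move=> k; rewrite normrN.
have hu' : (- g k - - g k.+1) @[k --> \oo] --> - L.
  rewrite (_ : (fun k => - g k - - g k.+1) = (fun k => - (g k - g k.+1))).
    exact: cvgN.
  by apply: funext => k; rewrite opprD.
by apply: (bdd_diff_pos _ _ _ _ hg' hu'); rewrite oppr_gt0.
Qed.

Lemma sumS (R : realType) d (F : 'rV['Z_d]_5 -> R) :
  \sum_t F t = \sum_(i < #|{: 'rV['Z_d]_5}|) F (enum_val i).
Proof. by rewrite -big_enum_val. Qed.

Lemma ratr_frac (R : realType) (a b : nat) : ratr (a%:R / b%:R) = a%:R / b%:R :> R.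
Proof. by rewrite fmorph_div !rmorph_nat. Qed.

Lemma Pqd_sum (R : realType) q d (hq : (0 < q)%N) s : \sum_t Pqd q d s t = 1 :> R.
Proof.
rewrite /Pqd -mulr_suml.
have := mu_sum _ q d s (fun _ => 1 : R); under eq_bigr do rewrite mulr1.
move=> ->; rewrite sumr_const card_ord divff //.
by rewrite pnatr_eq0; lia.
Qed.

Lemma Pqd_ge0 (R : realType) q d s t : 0 <= Pqd q d s t :> R.
Proof. by rewrite /Pqd divr_ge0 ?ler0n. Qed.

Theorem theorem2p6 (R : realType) (q d : nat) (hq : (1 < q)%N) (hd : (1 < d)%N)
  (delta : 'rV['Z_d]_5 -> R)
  (hdelta : forall s : 'rV['Z_d]_5,
     ((gamma N q d s)%:R / (N%:R : R)) @[N --> \oo] --> delta s) :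
  (forall s : 'rV['Z_d]_5, \sum_(t : 'rV['Z_d]_5) Pqd q d s t * delta t = delta s)
  /\ (forall s : 'rV['Z_d]_5, exists r : rat, delta s = ratr r).
Proof.
have q0 : (0 < q)%N by lia.
have rec : forall N s, (gamma (q * N)%N q d s)%:R / ((q * N)%N%:R : R) =
    \sum_t Pqd q d s t * ((gamma N q d t)%:R / N%:R).
  move=> N s; rewrite gammaM // natr_sum.
  rewrite -(mu_sum _ q d s (fun t => (gamma N q d t)%:R : R)).
  rewrite natrM invfM mulr_suml; apply: eq_bigr => t _.
  by rewrite /Pqd mulrACA.
have part1 : forall s, \sum_t Pqd q d s t * delta t = delta s.
  move=> s.
  have h1 := subseq_cvg _ _ _ (fun N => (q * N)%N) (fun N => leq_pmull N q0) (hdelta s).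
  have h2 : (\sum_t Pqd q d s t * ((gamma N q d t)%:R / N%:R)) @[N --> \oo] -->
      \sum_t Pqd q d s t * delta t.
    apply: cvg_sumr => t; apply: cvgM; [exact: cvg_cst | exact: hdelta].
  rewrite (_ : (fun N => \sum_t Pqd q d s t * ((gamma N q d t)%:R / N%:R)) =
     (fun N => (gamma (q * N)%N q d s)%:R / ((q * N)%N%:R : R))) in h2; last first.
    by apply: funext => N; rewrite rec.
  exact: (cvg_unique _ h2 h1).
split => //.
pose a k s : R := (gamma (q ^ k)%N q d s)%:R / ((q ^ k)%N%:R).
have ha : forall s, a k s @[k --> \oo] --> delta s.
  move=> s; rewrite /a; have := (subseq_cvg _ _ _ (fun k => (q ^ k)%N) (fun k => ltnW (ltn_expq q hq k)) (hdelta s)). exact.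
have arec : forall k s, a k.+1 s = \sum_t Pqd q d s t * a k t.
  by move=> k s; rewrite /a expnS rec.
pose n := #|{: 'rV['Z_d]_5}|.
pose ev (i : 'I_n) : 'rV['Z_d]_5 := enum_val i.
pose Q : 'M[R]_n := \matrix_(i, j) Pqd q d (ev j) (ev i).
pose Qr : 'M[rat]_n := \matrix_(i, j) ((mu q d (ev j) (ev i))%:R / q%:R).
pose va k : 'rV[R]_n := \row_i a k (ev i).
pose vd : 'rV[R]_n := \row_i delta (ev i).
pose fr : 'rV[rat]_n := \row_i ((gamma (q ^ 0)%N q d (ev i))%:R / ((q ^ 0)%N%:R)).
have hQ : Q = map_mx ratr Qr by apply/matrixP => i j; rewrite !mxE ratr_frac.
have hf : va 0%N = map_mx ratr fr by apply/matrixP => i j; rewrite !mxE ratr_frac.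
have hva : forall k, va k.+1 = va k *m Q.
  move=> k; apply/matrixP => i j; rewrite !mxE arec sumS; apply: eq_bigr => l _.
  by rewrite !mxE mulrC.
have hvd : vd *m Q = vd.
  apply/matrixP => i j; rewrite !mxE -(part1 (ev j)) sumS; apply: eq_bigr => l _.
  by rewrite !mxE mulrC.
pose B : 'M[R]_n := 1%:M - Q.
pose Br : 'M[rat]_n := 1%:M - Qr.
have hB : B = map_mx ratr Br by rewrite /B /Br map_mxB map_mx1 hQ.
have hsub : forall k, va 0%N - va k = (\sum_(j < k) va j) *m B.
  elim=> [|k IH]; first by rewrite big_ord0 mul0mx subrr.
  rewrite big_ord_recr /= mulmxDl -IH hva /B mulmxBr mulmx1.
  by rewrite addrA subrK.
have hF : (va 0%N - vd <= B)%MS.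
  rewrite submxE; apply/eqP/matrixP => i j; rewrite (ord1 i) [RHS]mxE mxE.
  have hk : forall k, \sum_l (va 0%N - va k) 0 l * cokermx B l j = 0.
    move=> k; have /eqP/matrixP/(_ 0 j) : (va 0%N - va k) *m cokermx B == 0.
      by rewrite -submxE hsub submxMl.
    by rewrite !mxE.
  have cva : forall l, (va 0%N - va k) 0 l @[k --> \oo] --> (va 0%N - vd) 0 l.
    move=> l; rewrite (_ : (fun k => (va 0%N - va k) 0 l) = (fun k => va 0%N 0 l - a k (ev l))); last first.
      by apply: funext => k; rewrite !mxE.
    have -> : (va 0%N - vd) 0 l = va 0%N 0 l - delta (ev l) by rewrite !mxE.
    apply: cvgB; [exact: cvg_cst | exact: ha].
  have c1 : (\sum_l (va 0%N - va k) 0 l * cokermx B l j) @[k --> \oo] --> 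
      \sum_l (va 0%N - vd) 0 l * cokermx B l j.
    apply: cvg_sumr => l; apply: cvgM; [exact: cva | exact: cvg_cst].
  rewrite (_ : (fun k => \sum_l (va 0%N - va k) 0 l * cokermx B l j) = (fun k => 0)) in c1; last first.
    by apply: funext => k; rewrite hk.
  exact: (cvg_unique _ c1 (cvg_cst _)).
have hvdB : vd *m B = 0 by rewrite /B mulmxBr mulmx1 hvd subrr.
have hG : (row_mx (va 0%N) (0 : 'rV[R]_n) <= block_mx 1%:M B B 0)%MS.
  case/submxP: hF => y0 hy0.
  apply/submxP; exists (row_mx vd y0).
  by rewrite mul_row_block mulmx1 mulmx0 addr0 -hy0 hvdB addrC subrK.
have hGr : (row_mx fr (0 : 'rV[rat]_n) <= block_mx 1%:M Br Br 0)%MS.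
  rewrite -(map_submx (@ratr R)) map_row_mx map_block_mx !map_mx0 map_mx1 -hB -hf.
  exact: hG.
case/submxP: hGr => zr hzr.
rewrite -(hsubmxK zr) mul_row_block mulmx1 mulmx0 addr0 in hzr.
case/eq_row_mx: hzr => e1 e2.
set xr := lsubmx zr in e1 e2; set yr := rsubmx zr in e1 e2.
pose x' := map_mx (@ratr R) xr; pose y' := map_mx (@ratr R) yr.
have hx1 : va 0%N = x' + y' *m B by rewrite hf e1 map_mxD map_mxM -hB.
have hx2 : x' *m B = 0.
  by have := congr1 (map_mx (@ratr R)) e2; rewrite map_mx0 map_mxM -hB => <-.
have hx3 : x' *m Q = x'.
  by apply/esym/subr0_eq; rewrite -hx2 /B mulmxBr mulmx1.
pose h k := iter k (fun v => v *m Q) y'.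
have he : forall k, va k - x' = h k - h k.+1.
  elim=> [|k IH].
    by rewrite hx1 addrC addKr /B mulmxBr mulmx1.
  by rewrite hva -{1}hx3 -mulmxBl IH mulmxBl.
pose c := \sum_i `|y' 0 i|.
have hQs : forall v : 'rV[R]_n, (forall i, `|v 0 i| <= c) -> forall j, `|(v *m Q) 0 j| <= c.
  move=> v hv j; rewrite mxE.
  apply: le_trans (ler_norm_sum _ _ _) _.
  apply: (@le_trans _ _ (\sum_i c * Q i j)).
    apply: ler_sum => i _; rewrite normrM (ger0_norm (x := Q i j)); last first.
      by rewrite mxE Pqd_ge0.
    by apply: ler_wpM2r; [rewrite mxE Pqd_ge0 | exact: hv].
  rewrite -mulr_sumr (_ : \sum_i Q i j = 1) ?mulr1 //.
  rewrite (eq_bigr (fun i => Pqd q d (ev j) (ev i))); last by move=> i _; rewrite mxE.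
  by rewrite -sumS Pqd_sum.
have hb : forall k i, `|h k 0 i| <= c.
  elim=> [|k IH] i.
    by rewrite /c (bigD1 i) //= lerDl sumr_ge0.
  exact: hQs.
move=> s.
exists (xr 0 (enum_rank s)).
have E : forall k, h k 0 (enum_rank s) - h k.+1 0 (enum_rank s) = a k s - x' 0 (enum_rank s).
  move=> k; have := he k; move/matrixP/(_ 0 (enum_rank s)).
  rewrite !mxE /ev enum_rankK => <-.
  by [].
have cv : (h k 0 (enum_rank s) - h k.+1 0 (enum_rank s)) @[k --> \oo] --> delta s - x' 0 (enum_rank s).
  rewrite (_ : (fun k => h k 0 (enum_rank s) - h k.+1 0 (enum_rank s)) = (fun k => a k s - x' 0 (enum_rank s))).
    apply: cvgB; [exact: ha | exact: cvg_cst].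
  by apply: funext => k; rewrite E.
have := bdd_diff _ (fun k => h k 0 (enum_rank s)) c _ (fun k => hb k _) cv.
by move/subr0_eq => ->; rewrite mxE.
Qed.
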